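(* The following hold. (1) $\alpha_*(\Sigma^* )=\mathcal Q$ and $\alpha_{\le\omega}(\Sigma^{\le\omega})=\mathcal C$ (top elements are preserved); $\alpha_*(\emptyset)=\emptyset$ and $\alpha_{\le\omega}(\emptyset)=\emptyset$. (2) For $U,U'\subseteq\Sigma^*$ and $V,V'\subseteq\Sigma^{\le\omega}$: $\alpha_*(U\cup U')=\alpha_*(U)\cup\alpha_*(U')$ and $\alpha_{\le\omega}(V\cup V')=\alpha_{\le\omega}(V)\cup\alpha_{\le\omega}(V')$. (3) $\alpha_*(U\cdot U')=\alpha_*(U)\cdot\alpha_*(U')$ and $\alpha_{\le\omega}(U\cdot V)=\alpha_*(U)\cdot\alpha_{\le\omega}(V)$. (4) If $n\ge1$, $\Phi$ is a monotone operator on $\mathcal P(\Sigma^* )^n$, $F$ is a monotone operator on $\mathcal M_*^n$, and $\alpha_*\circ\Phi=F\circ\alpha_*$ (with $\alpha_*$ applied componentwise), then $\alpha_*(\mathrm{lfp}(\Phi))=\mathrm{lfp}(F)$. (5) For every $U\subseteq\Sigma^*$: $\alpha_{\le\omega}(U^\omega)=\alpha_*(U)^\omega$.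
   Context: $\Sigma$ is a finite alphabet, $\Sigma^{\le\omega}=\Sigma^*\cup\Sigma^\omega$; concatenation $w\cdot u$ equals $wu$ if $w$ is finite and $w$ if $w$ is infinite, extended pointwise to languages. For $A\subseteq\Sigma^*$, $A^\omega$ is the set of all words $w_0w_1w_2\cdots$ with $w_i\in A$, and $CD^\omega$ means $C\cdot D^\omega$. Fix an extended Büchi automaton $\mathfrak A=(Q,\Sigma,\delta,q_0,F)$ (finite states, $\delta:Q\times\Sigma\to\mathcal P(Q)$, initial $q_0$, final $F$). For $w\in\Sigma^*$ write $p\overset{w}{\leadsto}q$ if $q$ is reachable from $p$ reading $w$, and $p\overset{w}{\leadsto}_F q$ if there are $q''\in F$, $w=uv$ with $p\overset{u}{\leadsto}q''\overset{v}{\leadsto}q$. For $w,u\in\Sigma^+$, $w\sim u$ iff for all $p,q$: $p\overset{w}{\leadsto}q\Leftrightarrow p\overset{u}{\leadsto}q$ and $p\overset{w}{\leadsto}_Fq\Leftrightarrow p\overset{u}{\leadsto}_Fq$. $\mathcal Q=\Sigma^+/{\sim}\uplus\{[\epsilon]\}$ with $[\epsilon]=\{\epsilon\}$; concatenation of classes is well defined. Let $\mathcal C=\{(C,D)\mid C,D\in\mathcal Q,\ CD=C,\ DD=D\}$. Define $\mathfrak f(V)=\{(C,D)\in\mathcal C\mid CD^\omega\cap V\neq\emptyset\}$ and $\mathfrak g(\mathcal V)=\bigcup_{(C,D)\in\mathcal V}CD^\omega$; closure $\mathfrak c(\mathcal V)=\bigcup_{n\ge1}(\mathfrak f\circ\mathfrak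 g)^n(\mathcal V)$. $\mathcal M_{\le\omega}=\{\mathfrak c(\mathfrak f(V))\mid V\subseteq\Sigma^{\le\omega}\}$, $\mathcal M_*=\mathcal P(\mathcal Q)$, ordered by inclusion. $\alpha_*(U)=\{C\in\mathcal Q\mid C\cap U\neq\emptyset\}$, $\alpha_{\le\omega}(V)=\mathfrak c(\mathfrak f(V))$, $\gamma_*(\mathcal U)=\bigcup_{C\in\mathcal U}C$, $\gamma_{\le\omega}(\mathcal V)=\mathfrak g(\mathcal V)$. Abstract operations: for $\mathcal U,\mathcal U'\in\mathcal M_*$, $\mathcal U\cdot\mathcal U'=\{CC'\mid C\in\mathcal U,C'\in\mathcal U'\}$; for $\mathcal U\in\mathcal M_*$, $\mathcal V\in\mathcal M_{\le\omega}$, $\mathcal U\cdot\mathcal V=\{(AC,D)\mid A\in\mathcal U,(C,D)\in\mathcal V\}$; for $\mathcal U\in\mathcal M_*$, $\mathcal U^\omega:=\alpha_{\le\omega}(\gamma_*(\mathcal U)^\omega)$. *)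

(* Defs.v *)
From mathcomp Require Import all_boot.
Set Implicit Arguments. Unset Strict Implicit. Unset Printing Implicit Defensive.

Inductive word (Sigma : Type) : Type :=
  | Fin of seq Sigma
  | Inf of (nat -> Sigma).
Arguments Fin {Sigma}. Arguments Inf {Sigma}.

Definition lfp (I A : Type) (Phi : (I -> A -> Prop) -> I -> A -> Prop)
  : I -> A -> Prop :=
  fun i a => forall X : I -> A -> Prop,
      (forall j b, Phi X j b -> X j b) -> X i a.

Definition monotone_op (I A : Type) (Phi : (I -> A -> Prop) -> I -> A -> Prop) :=
  forall X Y : I -> A -> Prop, (forall i a, X i a -> Y i a) ->
    forall i a, Phi X i a -> Phi Y i a.

Section Words.
Variable Sigma : Type.
Definition lang := seq Sigma -> Prop.
Definition olang := word Sigma -> Prop.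

Definition app (u : seq Sigma) (w : word Sigma) : word Sigma :=
  match w with
  | Fin v => Fin (u ++ v)
  | Inf x => Inf (fun n => if n < size u then nth (x 0) u n else x (n - size u))
  end.

Definition catF (U U' : lang) : lang :=
  fun w => exists u u', [/\ U u, U' u' & w = u ++ u'].

Definition catL (U : lang) (V : olang) : olang :=
  fun w => exists u v, [/\ U u, V v & w = app u v].

Definition pref (ws : nat -> seq Sigma) (N : nat) : seq Sigma :=
  flatten [seq ws i | i <- iota 0 N].

Definition concat_inf (ws : nat -> seq Sigma) (w : word Sigma) : Prop :=
  match w with
  | Fin u => exists N, (forall i, N <= i -> ws i = [::]) /\ u = pref ws N
  | Inf x => (forall N, exists2 i, N <= i & ws i <> [::]) /\
             (forall N j, j < size (pref ws N) -> nth (x j) (pref ws N) j = x j)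
  end.

Definition omega (A : lang) : olang :=
  fun w => exists ws : nat -> seq Sigma, (forall i, A (ws i)) /\ concat_inf ws w.
End Words.

Section Automaton.
Local Unset Implicit Arguments.
Variables (Sigma Q : finType) (delta : Q -> Sigma -> {set Q}) (F : {set Q}).

Fixpoint reach (p : Q) (w : seq Sigma) (q : Q) : bool :=
  match w with
  | [::] => p == q
  | a :: w' => [exists r in delta p a, reach r w' q]
  end.

Definition reachF (p : Q) (w : seq Sigma) (q : Q) : Prop :=
  exists u v q'', [/\ w = u ++ v, q'' \in F, reach p u q'' & reach q'' v q].

Definition sim (w u : seq Sigma) : Prop :=
  [/\ w <> [::], u <> [::] &
      forall p q, (reach p w q <-> reach p u q) /\ (reachF p w q <-> reachF p u q)].

Definition clsL (w : seq Sigma) : lang Sigma :=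
  if w is [::] then (fun u => u = [::]) else sim w.

(* elements of \mathcal Q: the ~-classes of nonempty words and [eps] *)
Definition isClass (C : lang Sigma) : Prop :=
  C = (fun u => u = [::]) \/ exists w, w <> [::] /\ C = sim w.

Lemma clsL_isClass w : isClass (clsL w).
Proof. case: w => [|a w]; [by left | right; by exists (a :: w)]. Qed.

Definition Cls := {C : lang Sigma | isClass C}.

Definition cls (w : seq Sigma) : Cls := exist _ (clsL w) (clsL_isClass w).

Definition mulC (C D E : Cls) : Prop :=
  exists c d, [/\ proj1_sig C c, proj1_sig D d & E = cls (c ++ d)].

Definition cw (p : Cls * Cls) : olang Sigma :=
  catL (proj1_sig p.1) (omega (proj1_sig p.2)).

Definition calC (p : Cls * Cls) : Prop := mulC p.1 p.2 p.1 /\ mulC p.2 p.2 p.2.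

Definition fV (V : olang Sigma) : Cls * Cls -> Prop :=
  fun p => calC p /\ exists w, cw p w /\ V w.

Definition gV (VV : Cls * Cls -> Prop) : olang Sigma :=
  fun w => exists p, VV p /\ cw p w.

Definition closure (VV : Cls * Cls -> Prop) : Cls * Cls -> Prop :=
  fun p => exists n, iter n.+1 (fun X => fV (gV X)) VV p.

Definition alphaS (U : lang Sigma) : Cls -> Prop :=
  fun C => exists u, proj1_sig C u /\ U u.

Definition alphaW (V : olang Sigma) : Cls * Cls -> Prop := closure (fV V).

Definition gammaS (UU : Cls -> Prop) : lang Sigma :=
  fun w => exists C, UU C /\ proj1_sig C w.

Definition gammaW (VV : Cls * Cls -> Prop) : olang Sigma := gV VV.

Definition mulM (UU UU' : Cls -> Prop) : Cls -> Prop :=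
  fun E => exists C C', [/\ UU C, UU' C' & mulC C C' E].

Definition mulMW (UU : Cls -> Prop) (VV : Cls * Cls -> Prop) : Cls * Cls -> Prop :=
  fun p => exists A C, [/\ UU A, VV (C, p.2) & mulC A C p.1].

Definition omegaM (UU : Cls -> Prop) : Cls * Cls -> Prop :=
  alphaW (omega (gammaS UU)).

End Automaton.
Arguments reach {Sigma Q} delta p w q.
Arguments reachF {Sigma Q} delta F p w q.
Arguments sim {Sigma Q} delta F w u.
Arguments clsL {Sigma Q} delta F w _.
Arguments isClass {Sigma Q} delta F C.
Arguments Cls {Sigma Q} delta F.
Arguments cls {Sigma Q} delta F w.
Arguments mulC {Sigma Q} delta F C D E.
Arguments cw {Sigma Q} delta F p _.
Arguments calC {Sigma Q} delta F p.
Arguments fV {Sigma Q} delta F V p.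
Arguments gV {Sigma Q} delta F VV _.
Arguments closure {Sigma Q} delta F VV p.
Arguments alphaS {Sigma Q} delta F U C.
Arguments alphaW {Sigma Q} delta F V _.
Arguments gammaS {Sigma Q} delta F UU _.
Arguments gammaW {Sigma Q} delta F VV _.
Arguments mulM {Sigma Q} delta F UU UU' E.
Arguments mulMW {Sigma Q} delta F UU VV p.
Arguments omegaM {Sigma Q} delta F UU _.

(* Main.v *)
Require Import Defs.
From mathcomp Require Import all_boot.
From mathcomp Require Import zify.
From Stdlib Require Import FunctionalExtensionality PropExtensionality ProofIrrelevance ClassicalEpsilon Classical.
Set Implicit Arguments. Unset Strict Implicit. Unset Printing Implicit Defensive.

Lemma fext2 (A B : Type) (f g : A -> B) : (forall x, f x = g x) -> f = g.
Proof. exact: functional_extensionality. Qed.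
Lemma pext (P R : Prop) : (P <-> R) -> P = R.
Proof. exact: propositional_extensionality. Qed.

Lemma cat_split (T : Type) (a b u v : seq T) : a ++ b = u ++ v ->
  (exists m, a = u ++ m /\ v = m ++ b) \/ (exists m, u = a ++ m /\ b = m ++ v).
Proof.
elim: a u => [|x a IH] [|y u] /= H.
- by left; exists [::].
- by right; exists (y :: u).
- by left; exists (x :: a).
- case: H => <- /IH [[m [-> ->]]|[m [-> ->]]]; [left|right]; by exists m.
Qed.

Lemma pigeon (T : finType) (f : nat -> T) : exists t, forall N, exists2 m, N <= m & f m = t.
Proof.
apply: NNPP => Hn.
have H : forall t, exists N, forall m, N <= m -> f m <> t.
  move=> t; apply: NNPP => Ht; apply: Hn; exists t => N; apply: NNPP => HN; apply: Ht.
  by exists N => m Hm Hf; apply: HN; exists m.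
case: (choice _ H) => Nf HNf.
by apply: (HNf (f (\max_t Nf t)) (\max_t Nf t)) => //; exact: leq_bigmax.
Qed.

Lemma extract (P : nat -> Prop) (h : nat -> nat) : (forall N, exists2 m, N <= m & P m) ->
  exists g : nat -> nat, (forall j, P (g j)) /\ (forall j, h (g j) <= g j.+1).
Proof.
move=> H; have H' : forall N, exists m, N <= m /\ P m by move=> N; case: (H N) => m; exists m.
case: (choice _ H') => nxt Hnxt.
exists (fun j => iter j (fun m => nxt (h m)) (nxt 0)); split.
- by case=> [|j] /=; apply: (Hnxt _).2.
- by move=> j /=; apply: (Hnxt _).1.
Qed.

Section S.
Variables (Sigma Q : finType) (delta : Q -> Sigma -> {set Q}) (F : {set Q}).
Local Notation reach := (reach delta).
Local Notation reachF := (reachF delta F).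

Lemma reach_cat p u v q : reach p (u ++ v) q = [exists r, reach p u r && reach r v q].
Proof.
elim: u p => [|a u IH] p /=.
- apply/idP/existsP => [H|[r /andP[/eqP-> H]]]; [by exists p; rewrite eqxx|done].
- apply/existsP/existsP => [[r /andP[Hr]]|[s /andP[/existsP[r /andP[Hr H1]] H2]]].
    rewrite IH => /existsP[s /andP[H1 H2]]. exists s. rewrite H2 andbT.
    by apply/existsP; exists r; rewrite Hr.
  by exists r; rewrite Hr IH; apply/existsP; exists s; rewrite H1.
Qed.

Lemma reach_catP p u v q : reach p (u ++ v) q <-> exists r, reach p u r /\ reach r v q.
Proof.
rewrite reach_cat; split => [/existsP[r /andP[? ?]]|[r [? ?]]]; first by exists r.
by apply/existsP; exists r; apply/andP.
Qed.

Lemma reachF_cat p u v q : reachF p (u ++ v) q <->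
  exists r, (reachF p u r /\ reach r v q) \/ (reach p u r /\ reachF r v q).
Proof.
split.
- move=> [a [b [q'' [E Hq Ha Hb]]]].
  case: (cat_split (esym E)) => [[m [Ea Ev]]|[m [Eu Eb]]].
  + rewrite Ea in Ha; case: ((reach_catP _ _ _ _).1 Ha) => r [H1 H2].
    exists r; right; split => //. by exists m, b, q''; split.
  + rewrite Eb in Hb; case: ((reach_catP _ _ _ _).1 Hb) => r [H1 H2].
    exists r; left; split => //. by exists a, m, q''; split.
- move=> [r [[[a [m [q'' [E Hq Ha Hm]]]] Hv]|[Hu [m [b [q'' [E Hq Hm Hb]]]]]]].
  + exists a, (m ++ v), q''; split => //; first by rewrite E catA.
    by apply/(iffRL (reach_catP _ _ _ _)); exists r.
  + exists (u ++ m), b, q''; split => //; first by rewrite E catA.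
    by apply/(iffRL (reach_catP _ _ _ _)); exists r.
Qed.

Definition reachFb p w q := [exists i : 'I_(size w).+1,
  [exists r in F, reach p (take i w) r && reach r (drop i w) q]].

Lemma reachFP p w q : reachF p w q <-> reachFb p w q.
Proof.
split.
- move=> [u [v [r [-> Hr H1 H2]]]].
  have Hi : size u < (size (u ++ v)).+1 by rewrite ltnS size_cat leq_addr.
  apply/existsP; exists (Ordinal Hi).
  apply/existsP; exists r. by rewrite /= take_size_cat // drop_size_cat // Hr H1 H2.
- move=> /existsP[i /existsP[r /andP[Hr /andP[H1 H2]]]].
  exists (take i w), (drop i w), r; split => //. by rewrite cat_take_drop.
Qed.

Definition sigw (w : seq Sigma) : bool * {ffun Q * Q -> bool * bool} :=
  (nilp w, [ffun pq => (reach pq.1 w pq.2, reachFb pq.1 w pq.2)]).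

Lemma sigw_reach w u : sigw w = sigw u -> forall p q, reach p w q = reach p u q.
Proof. by case=> _ /ffunP H p q; have := H (p, q); rewrite !ffunE; case. Qed.
Lemma sigw_reachF w u : sigw w = sigw u -> forall p q, reachF p w q <-> reachF p u q.
Proof.
case=> _ /ffunP H p q; have := H (p, q); rewrite !ffunE; case=> _ E.
by rewrite !reachFP E.
Qed.
Lemma sigw_nil w u : sigw w = sigw u -> (w = [::] <-> u = [::]).
Proof. case=> E _; move: E; by case: w; case: u. Qed.

Lemma sigw_eqP w u : (w = [::] <-> u = [::]) -> (forall p q, reach p w q = reach p u q) ->
  (forall p q, reachF p w q <-> reachF p u q) -> sigw w = sigw u.
Proof.
move=> H1 H2 H3; rewrite /sigw; f_equal.
  have : nilp w = nilp u by apply/idP/idP => /nilP/H1 ->.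
  done.
apply/ffunP => [[p q]]; rewrite !ffunE /= H2; f_equal.
by apply/idP/idP => /reachFP/H3/reachFP.
Qed.

Lemma sigw_cat u u' v v' : sigw u = sigw u' -> sigw v = sigw v' ->
  sigw (u ++ v) = sigw (u' ++ v').
Proof.
move=> Hu Hv.
have H1 : (u ++ v = [::] <-> u' ++ v' = [::]).
  have := sigw_nil Hu; have := sigw_nil Hv.
  case: u {Hu}; case: u' {Hv}; case: v; case: v' => //=; try by move=> *; split.
  all: intros; try (exfalso; intuition congruence).
  all: idtac.
have H2 : forall p q, reach p (u ++ v) q = reach p (u' ++ v') q.
  by move=> p q; rewrite !reach_cat; apply: eq_existsb => r; rewrite (sigw_reach Hu) (sigw_reach Hv).
have H3 : forall p q, reachF p (u ++ v) q <-> reachF p (u' ++ v') q.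
  move=> p q; rewrite !reachF_cat.
  split=> [[r H]|[r H]]; exists r; move: H;
  by rewrite !(sigw_reach Hu) !(sigw_reach Hv) (sigw_reachF Hu) (sigw_reachF Hv).
exact: sigw_eqP.
Qed.

Local Notation Cls := (Cls delta F).
Local Notation cls := (cls delta F).
Definition mem (C : Cls) (c : seq Sigma) := proj1_sig C c.

Lemma clsLE w : clsL delta F w = fun u => sigw w = sigw u.
Proof.
apply: fext2 => u; apply: pext. case: w => [|a w] /=.
- split => [->//|/sigw_nil H]; by apply/H.
- split.
  + case=> H1 H2 H3.
    have G1 : (a :: w = [::] <-> u = [::]) by split => H; [case: H1|case: H2].
    have G2 : forall p q, reach p (a :: w) q = reach p u q.
      by move=> p q; apply/idP/idP => [/(H3 p q).1.1|/(H3 p q).1.2].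
    have G3 : forall p q, reachF p (a :: w) q <-> reachF p u q by move=> p q; apply: (H3 p q).2.
    exact: sigw_eqP G1 G2 G3.
  + move=> E; split => //.
    * by move=> Hu; move: (sigw_nil E) => [_ /(_ Hu)].
    * by move=> p q; rewrite (sigw_reach E) (sigw_reachF E).
Qed.

Lemma mem_cls w u : mem (cls w) u <-> sigw w = sigw u.
Proof. by rewrite /mem /= clsLE. Qed.

Lemma mem_cls_self w : mem (cls w) w.
Proof. by apply/mem_cls. Qed.

Lemma cls_eq w u : cls w = cls u <-> sigw w = sigw u.
Proof.
split.
- move=> E; apply/mem_cls; rewrite E; exact: mem_cls_self.
- move=> E; rewrite /Defs.cls.
  have E' : clsL delta F w = clsL delta F u by rewrite !clsLE E.
  generalize (@clsL_isClass _ _ delta F w) (@clsL_isClass _ _ delta F u); rewrite E' => p1 p2.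
  by rewrite (proof_irrelevance _ p1 p2).
Qed.

Lemma memE C c : mem C c -> C = cls c.
Proof.
case: C => L pL; rewrite /mem /= => Hc.
have EL : L = clsL delta F c.
  case: (pL) => [EL|[w [Hw EL]]]; subst L.
  - by rewrite Hc.
  - have Ew : sim delta F w = clsL delta F w by case: (w) Hw.
    rewrite Ew !clsLE; rewrite Ew clsLE in Hc; by rewrite Hc.
rewrite /Defs.cls; generalize (@clsL_isClass _ _ delta F c); rewrite -EL => p2.
by rewrite (proof_irrelevance _ pL p2).
Qed.

Lemma cls_mem C : exists c, mem C c.
Proof.
case: C => L pL; case: (pL) => [EL|[w [Hw EL]]].
  by exists [::]; rewrite /mem /= EL.
exists w; rewrite /mem /= EL; have -> : sim delta F w = clsL delta F w by case: (w) Hw.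
exact: mem_cls_self.
Qed.

Lemma cls_surj C : exists c, C = cls c.
Proof. by case: (cls_mem C) => c /memE ->; exists c. Qed.

Lemma mem_clsE w u : mem (cls w) u -> cls u = cls w.
Proof. by move/memE. Qed.

Lemma cls_nil w : cls w = cls [::] <-> w = [::].
Proof. split => [/cls_eq/sigw_nil [_ H]|->//]; exact: H. Qed.

Lemma cls_cat w w' u u' : cls w = cls w' -> cls u = cls u' -> cls (w ++ u) = cls (w' ++ u').
Proof. by move=> /cls_eq H1 /cls_eq H2; apply/cls_eq/sigw_cat. Qed.

Lemma mulC_cls c d : mulC delta F (cls c) (cls d) (cls (c ++ d)).
Proof. by exists c, d; split => //; apply: mem_cls_self. Qed.

Lemma mulCE C D E c d : mulC delta F C D E -> mem C c -> mem D d -> E = cls (c ++ d).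
Proof.
move=> [c' [d' [Hc' Hd' ->]]] Hc Hd; apply: cls_cat.
- by rewrite -(memE Hc') (memE Hc).
- by rewrite -(memE Hd') (memE Hd).
Qed.

Lemma mulC_ex C D : exists E, mulC delta F C D E.
Proof. case: (cls_surj C) (cls_surj D) => c -> [d ->]; eexists; exact: mulC_cls. Qed.

Lemma mulC_clsE c d E : mulC delta F (cls c) (cls d) E <-> E = cls (c ++ d).
Proof. split => [H|->]; [exact: mulCE H (mem_cls_self _) (mem_cls_self _)|exact: mulC_cls]. Qed.

Lemma catsI' (s a b : seq Sigma) : s ++ a = s ++ b -> a = b.
Proof. by elim: s => //= x s IH [] /IH. Qed.

Definition seg (z : nat -> Sigma) i j := [seq z k | k <- iota i (j - i)].

Lemma size_seg z i j : size (seg z i j) = j - i.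
Proof. by rewrite size_map size_iota. Qed.

Lemma seg_cat z i j k : i <= j -> j <= k -> seg z i j ++ seg z j k = seg z i k.
Proof.
move=> Hij Hjk; rewrite /seg -map_cat.
have -> : iota j (k - j) = iota (i + (j - i)) (k - j) by rewrite subnKC.
rewrite -iotaD; congr (map _ (iota _ _)); lia.
Qed.

Lemma nth_seg z i j d n : n < j - i -> nth d (seg z i j) n = z (i + n).
Proof. by move=> H; rewrite (nth_map 0) ?size_iota // nth_iota. Qed.

Lemma seg_shift z x m a b : (forall n, z (m + n) = x n) -> seg z (m + a) (m + b) = seg x a b.
Proof.
move=> H; rewrite /seg subnDl iotaDl -map_comp; apply: eq_map => n /=; exact: H.
Qed.

Lemma seg_nil z i j : (seg z i j == [::]) = (j <= i).
Proof. by rewrite -size_eq0 size_seg subn_eq0. Qed.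

Lemma pref_S (ws : nat -> seq Sigma) N : pref ws N.+1 = pref ws N ++ ws N.
Proof. by rewrite /pref -addn1 iotaD map_cat flatten_cat /= cats0. Qed.

Lemma pref_add (ws : nat -> seq Sigma) N k :
  pref ws (N + k) = pref ws N ++ flatten [seq ws i | i <- iota N k].
Proof. by rewrite /pref iotaD map_cat flatten_cat. Qed.

Lemma pref_mono (ws : nat -> seq Sigma) N M : N <= M -> exists t, pref ws M = pref ws N ++ t.
Proof. move=> H; rewrite -(subnKC H) pref_add; by eexists. Qed.

Lemma size_pref_mono (ws : nat -> seq Sigma) N M : N <= M -> size (pref ws N) <= size (pref ws M).
Proof. by move=> /(pref_mono ws)[t ->]; rewrite size_cat leq_addr. Qed.

Lemma pref_unbounded (ws : nat -> seq Sigma) :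
  (forall N, exists2 i, N <= i & ws i <> [::]) -> forall n, exists N, n < size (pref ws N).
Proof.
move=> H; elim=> [|n [N HN]].
- case: (H 0) => i _ Hi; exists i.+1; rewrite pref_S size_cat.
  by case: (ws i) Hi => // *; rewrite addnS.
- case: (H N) => i Hi Hwi; exists i.+1; rewrite pref_S size_cat.
  have := size_pref_mono ws Hi; case: (ws i) Hwi => //= a w _ Hm.
  by rewrite addnS ltnS (leq_trans HN (leq_trans Hm (leq_addr _ _))).
Qed.

Lemma concat_pref ws z : concat_inf ws (Inf z) -> forall N, pref ws N = seg z 0 (size (pref ws N)).
Proof.
case=> _ H N; apply: (@eq_from_nth _ (z 0)); first by rewrite size_seg subn0.
move=> j Hj; rewrite nth_seg ?subn0 //.
by rewrite (set_nth_default (z j)) // H.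
Qed.

Lemma concat_ws ws z : concat_inf ws (Inf z) ->
  forall k, ws k = seg z (size (pref ws k)) (size (pref ws k.+1)).
Proof.
move=> H k; apply: (@catsI' (pref ws k)).
rewrite -pref_S; transitivity (seg z 0 (size (pref ws k.+1))); first exact: concat_pref H k.+1.
rewrite -(@seg_cat z 0 (size (pref ws k))) //; last exact: size_pref_mono.
by congr (_ ++ _); apply: esym; exact: concat_pref H k.
Qed.

Lemma omega_ex (ws : nat -> seq Sigma) :
  (forall N, exists2 i, N <= i & ws i <> [::]) -> exists z, concat_inf ws (Inf z).
Proof.
move=> H; have U := pref_unbounded H.
case: (H 0) => i0 _; case E0: (ws i0) => [//|a0 w0] _.
pose K n := ex_minn (P := fun N => n < size (pref ws N)) (U n).
pose z n := nth a0 (pref ws (K n)) n.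
exists z; split => // N j Hj.
have HK : j < size (pref ws (K j)) by rewrite /K; case: ex_minnP.
rewrite /z; case: (leqP N (K j)) => HNK.
- case: (pref_mono ws HNK) => t ->; rewrite nth_cat Hj.
  exact: set_nth_default.
- case: (pref_mono ws (ltnW HNK)) => t ->; rewrite nth_cat HK.
  exact: set_nth_default.
Qed.

Lemma incr_le (B : nat -> nat) : (forall i, B i <= B i.+1) -> forall i j, i <= j -> B i <= B j.
Proof.
move=> H i j /subnK <-; elim: (j - i) => // k IH; rewrite addSn; exact: leq_trans IH (H _).
Qed.

Lemma incr_lt (B : nat -> nat) : (forall i, B i < B i.+1) -> forall i j, i < j -> B i < B j.
Proof.
move=> H i j Hij; apply: leq_trans (H i) _; apply: incr_le => // k; exact: ltnW.
Qed.

Lemma incr_ge (B : nat -> nat) : (forall i, B i < B i.+1) -> forall i, i <= B i.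
Proof. by move=> H; elim=> // i IH; exact: leq_ltn_trans IH (H i). Qed.

Local Notation cw := (cw delta F).

Definition inCW (C D : Cls) z := exists B : nat -> nat,
  [/\ forall i, B i < B i.+1, mem C (seg z 0 (B 0)) & forall i, mem D (seg z (B i) (B i.+1))].

Lemma mem_cls_nil w : mem (cls [::]) w -> w = [::].
Proof. by move/mem_clsE/cls_nil. Qed.

Lemma pref_seg z (B : nat -> nat) : (forall i, B i <= B i.+1) ->
  forall N, pref (fun i => seg z (B i) (B i.+1)) N = seg z (B 0) (B N).
Proof.
move=> H; elim=> [|N IH]; first by apply/esym/eqP; rewrite seg_nil.
by rewrite pref_S IH seg_cat //; apply: incr_le.
Qed.

Lemma cwInf C D z : cw (C, D) (Inf z) <-> inCW C D z.
Proof.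
split.
- case=> c [v [Hc Hv E]]; case: v Hv E => [v'|x] Hv //= [Ez].
  case: Hv => ws [Hws Hconc].
  have Hne : forall i, ws i <> [::].
    case: (Hconc) => Hinf _; case: (Hinf 0) => i0 _ Hi0.
    move=> i Hi; apply: Hi0; apply/cls_nil.
    by rewrite -(memE (Hws i0)) (memE (Hws i)) Hi.
  exists (fun i => size c + size (pref ws i)); split.
  + move=> i; rewrite ltn_add2l pref_S size_cat -{1}(addn0 (size (pref ws i))) ltn_add2l.
    by rewrite lt0n size_eq0; apply/eqP; exact: Hne.
  + have -> : seg z 0 (size c + size (pref ws 0)) = c; last done.
    rewrite /pref /= addn0; apply: (@eq_from_nth _ (x 0)); first by rewrite size_seg subn0.
    move=> j; rewrite size_seg subn0 => Hj; rewrite nth_seg ?subn0 // Ez /= Hj.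
    exact: set_nth_default.
  + move=> i; have -> : seg z (size c + size (pref ws i)) (size c + size (pref ws i.+1)) = ws i;
      last exact: Hws.
    rewrite (@seg_shift z x) -?(concat_ws Hconc) // => n.
    by rewrite Ez /= ltnNge leq_addr /= addKn.
- case=> B [HB HC HD].
  have HB' : forall i, B i <= B i.+1 by move=> i; exact: ltnW.
  exists (seg z 0 (B 0)), (Inf (fun n => z (B 0 + n))); split => //.
  + exists (fun i => seg z (B i) (B i.+1)); split => //; split.
    * by move=> N; exists N => //; apply/eqP; rewrite seg_nil -ltnNge; exact: HB.
    * move=> N j; rewrite pref_seg // size_seg => Hj; rewrite nth_seg //.
  + congr Inf; apply: fext2 => n /=; rewrite size_seg subn0.
    case: ltnP => Hn; first by rewrite nth_seg ?subn0.
    by rewrite subnKC.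
Qed.

Lemma pref_nil (ws : nat -> seq Sigma) : (forall i, ws i = [::]) -> forall N, pref ws N = [::].
Proof. by move=> H; elim=> // N IH; rewrite pref_S IH H. Qed.

Lemma cwFin C D u : cw (C, D) (Fin u) <-> D = cls [::] /\ mem C u.
Proof.
split.
- case=> c [v [Hc Hv E]]; case: v Hv E => [v'|x] Hv //= [Eu].
  case: Hv => ws [Hws [N [HN Ev]]]; simpl in Hws.
  have ED : D = cls [::] by rewrite (memE (Hws N)) HN.
  have Hall : forall i, ws i = [::] by move=> i; apply: mem_cls_nil; rewrite -ED; exact: Hws.
  by split => //; rewrite Eu Ev pref_nil // cats0.
- case=> -> Hu; exists u, (Fin [::]); split => //; last by rewrite /= cats0.
  exists (fun=> [::]); split; first by [].
  by exists 0; split.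
Qed.

Lemma cw_nilInf C z : ~ cw (C, cls [::]) (Inf z).
Proof.
move/cwInf => [B [HB _ HD]]; move: (mem_cls_nil (HD 0)) => /eqP.
by rewrite seg_nil leqNgt HB.
Qed.

Local Notation fV := (fV delta F).
Local Notation gV := (gV delta F).
Local Notation calC := (calC delta F).
Local Notation alphaW := (alphaW delta F).

Lemma alphaW_base V p : fV V p -> alphaW V p.
Proof.
move=> [Hc [w [Hw HV]]]; exists 0 => /=; split => //.
by exists w; split => //; exists p; split => //; split => //; exists w.
Qed.

Lemma alphaW_step V p p' w : alphaW V p' -> calC p -> cw p w -> cw p' w -> alphaW V p.
Proof.
move=> [n Hn] Hc Hw Hw'; exists n.+1; split => //.
by exists w; split => //; exists p'.
Qed.

Lemma alphaW_ind V (S : Cls * Cls -> Prop) : (forall p, fV V p -> S p) ->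
  (forall p p' w, S p' -> calC p -> cw p w -> cw p' w -> S p) ->
  forall p, alphaW V p -> S p.
Proof.
move=> H1 H2 p [n Hn].
suff : forall k p, iter k (fun X => fV (gV X)) (fV V) p -> S p by move/(_ n.+1 p Hn).
elim=> [|k IH] q /=; first exact: H1.
move=> [Hc [w [Hw [p' [Hp' Hw']]]]]; exact: H2 (IH _ Hp') Hc Hw Hw'.
Qed.

Lemma alphaW_mono V V' : (forall w, V w -> V' w) -> forall p, alphaW V p -> alphaW V' p.
Proof.
move=> H; apply: alphaW_ind.
- move=> p [Hc [w [Hw HV]]]; apply: alphaW_base; split => //; exists w; split => //; exact: H.
- move=> p p' w Hp'; exact: alphaW_step.
Qed.

Lemma fV_calC V p : fV V p -> calC p.
Proof. by case. Qed.

Lemma alphaW_calC V p : alphaW V p -> calC p.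
Proof. by apply: alphaW_ind => // p' [] . Qed.

Local Notation alphaS := (alphaS delta F).

Lemma calC_ne p : calC p -> exists w, cw p w.
Proof.
case: p => C D _; case: (cls_surj C) (cls_surj D) => c -> [d ->].
case Ed: d => [|a d'].
- by exists (Fin c); apply/cwFin; split => //; exact: mem_cls_self.
- have [x Hx] : exists x, concat_inf (fun _ => d) (Inf x).
    by apply: omega_ex => N; exists N => //; rewrite Ed.
  exists (app c (Inf x)); exists c, (Inf x); split => //; first exact: mem_cls_self.
  exists (fun _ => d); split => //; rewrite -Ed => _; exact: mem_cls_self.
Qed.

Lemma part1 : [/\ alphaS (fun _ => True) = (fun _ => True),
      alphaW (fun _ => True) = calC,
      alphaS (fun _ => False) = (fun _ => False)
    & alphaW (fun _ => False) = (fun _ => False)].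
Proof.
split; apply: fext2 => x; apply: pext; split => //.
- by move=> _; case: (cls_mem x) => c Hc; exists c.
- exact: alphaW_calC.
- move=> Hc; case: (calC_ne Hc) => w Hw; apply: alphaW_base; split => //; by exists w.
- by case=> u [].
- by move: x; apply: (@alphaW_ind _ (fun _ => False)) => [p [_ [w [_ []]]]|].
Qed.

Lemma part2 (U U' : lang Sigma) (V V' : olang Sigma) :
      alphaS (fun w => U w \/ U' w) = (fun C => alphaS U C \/ alphaS U' C) /\
      alphaW (fun w => V w \/ V' w) = (fun p => alphaW V p \/ alphaW V' p).
Proof.
split; apply: fext2 => x; apply: pext; split.
- by case=> u [Hu [H|H]]; [left|right]; exists u.
- by case=> [[u [Hu H]]|[u [Hu H]]]; exists u; split => //; [left|right].
- move: x; apply: (@alphaW_ind _ (fun p => alphaW V p \/ alphaW V' p)).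
  + by move=> p [Hc [w [Hw [H|H]]]]; [left|right]; apply: alphaW_base; split => //; exists w.
  + by move=> p p' w [H|H] Hc Hw Hw'; [left|right]; apply: alphaW_step H Hc Hw Hw'.
- by case; apply: alphaW_mono => w H; [left|right].
Qed.

Lemma lfp_pre (I A : Type) (Phi : (I -> A -> Prop) -> I -> A -> Prop) :
  monotone_op Phi -> forall i a, Phi (lfp Phi) i a -> lfp Phi i a.
Proof.
move=> Hm i a H X HX; apply: (HX); apply: (Hm (lfp Phi) X) _ i a H.
by move=> j b Hl; exact: Hl X HX.
Qed.

Lemma part4 (n : nat) (Phi : ('I_n -> lang Sigma) -> 'I_n -> lang Sigma)
          (Fop : ('I_n -> Cls -> Prop) -> 'I_n -> Cls -> Prop) :
      0 < n -> monotone_op Phi -> monotone_op Fop ->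
      (forall X, (fun i => alphaS (Phi X i)) = Fop (fun i => alphaS (X i))) ->
      (fun i => alphaS (lfp Phi i)) = lfp Fop.
Proof.
move=> _ HPhi HF H; apply: fext2 => i; apply: fext2 => C; apply: pext; split.
- case=> u [Hu Hl].
  pose X := fun j u => exists C', lfp Fop j C' /\ mem C' u.
  have HX : forall j b, Phi X j b -> X j b.
    move=> j b Hb; exists (cls b); split; last exact: mem_cls_self.
    apply: (lfp_pre (HF)) _ _ _.
    have E := f_equal (fun f => f j (cls b)) (H X); simpl in E.
    have : alphaS (Phi X j) (cls b) by exists b; split => //; exact: mem_cls_self.
    rewrite E; apply: (HF) => k C' [u' [Hu' [C'' [HC'' Hu'']]]].
    by rewrite (memE Hu') -(memE Hu'').
  case: (Hl X HX) => C' [HC' HuC']; by rewrite (memE Hu) -(memE HuC').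
- move=> HC; apply: (HC (fun i => alphaS (lfp Phi i))) => j b.
  have E := f_equal (fun f => f j b) (H (lfp Phi)); simpl in E.
  rewrite -E => [[u [Hu HP]]].
  by exists u; split => //; apply: (lfp_pre HPhi) _ _ HP.
Qed.

Local Notation mulM := (mulM delta F).
Lemma part3a (U U' : lang Sigma) : alphaS (catF U U') = mulM (alphaS U) (alphaS U').
Proof.
apply: fext2 => E; apply: pext; split.
- case=> w [HwE [u [u' [Hu Hu' Ew]]]].
  exists (cls u), (cls u'); split; try (by eexists; split; [exact: mem_cls_self|]).
  by rewrite (memE HwE) Ew; exact: mulC_cls.
- case=> C [C' [[u [HuC Hu]] [u' [HuC' Hu']] HM]].
  exists (u ++ u'); split; last by exists u, u'.
  rewrite (mulCE HM HuC HuC'); exact: mem_cls_self.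
Qed.

Lemma calC_DD E D d1 d2 : calC (E, D) -> mem D d1 -> mem D d2 -> mem D (d1 ++ d2).
Proof. by case=> /= _ HD H1 H2; rewrite (mulCE HD H1 H2); exact: mem_cls_self. Qed.

Lemma calC_ED E D e d : calC (E, D) -> mem E e -> mem D d -> mem E (e ++ d).
Proof. by case=> /= HE _ H1 H2; rewrite (mulCE HE H1 H2); exact: mem_cls_self. Qed.

Lemma inCW_shift E D z : calC (E, D) -> inCW E D z -> forall N, exists B : nat -> nat,
  [/\ forall i, B i < B i.+1, N <= B 0, forall k, mem E (seg z 0 (B k))
    & forall i, mem D (seg z (B i) (B i.+1))].
Proof.
move=> HC [B [HB HE HD]] N.
have HEk : forall k, mem E (seg z 0 (B k)).
  elim=> [//|k IH]; rewrite -(@seg_cat z 0 (B k)) //; last exact: ltnW (HB k).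
  exact: calC_ED HC IH (HD k).
exists (fun i => B (N + i)); split => //.
- by move=> i; rewrite addnS; exact: HB.
- by rewrite addn0; apply: incr_ge.
- by move=> i; rewrite addnS; exact: HD.
Qed.

Definition appf (u : seq Sigma) (x : nat -> Sigma) :=
  fun n => if n < size u then nth (x 0) u n else x (n - size u).

Lemma app_Inf (u : seq Sigma) x : app u (Inf x) = Inf (appf u x).
Proof. by []. Qed.

Lemma appf_pref u x : seg (appf u x) 0 (size u) = u.
Proof.
apply: (@eq_from_nth _ (x 0)); first by rewrite size_seg subn0.
move=> j; rewrite size_seg subn0 => Hj; rewrite nth_seg ?subn0 //= /appf Hj.
exact: set_nth_default.
Qed.

Lemma appf_shift u x n : appf u x (size u + n) = x n.
Proof. by rewrite /appf ltnNge leq_addr /= addKn. Qed.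

Lemma appf_seg u x i j : size u <= i -> seg (appf u x) i j = seg x (i - size u) (j - size u).
Proof.
move=> Hi; case: (leqP j i) => Hji.
- have E1 : seg (appf u x) i j = [::] by apply/eqP; rewrite seg_nil.
  have E2 : seg x (i - size u) (j - size u) = [::] by apply/eqP; rewrite seg_nil leq_sub2r.
  by rewrite E1 E2.
- rewrite -{1}(subnKC Hi) -{1}(subnKC (ltnW (leq_ltn_trans Hi Hji))).
  apply: seg_shift => n; exact: appf_shift.
Qed.

Lemma appf_seg0 u x i : size u <= i -> seg (appf u x) 0 i = u ++ seg x 0 (i - size u).
Proof.
move=> Hi; rewrite -(@seg_cat _ 0 (size u)) // appf_pref appf_seg // subnn //.
Qed.

Lemma app_cat (u c : seq Sigma) (v : word Sigma) : app u (app c v) = app (u ++ c) v.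
Proof.
case: v => [v|x] /=; first by rewrite catA.
congr Inf; apply: fext2 => n; rewrite size_cat.
case: (ltnP n (size u)) => H1.
- have H2 : n < size u + size c by apply: leq_trans H1 (leq_addr _ _).
  by rewrite H2 nth_cat H1; apply: set_nth_default.
- have H0 : (n < size u) = false by rewrite ltnNge H1.
  rewrite nth_cat H0 subnDA.
  case: (ltnP (n - size u) (size c)) => H3.
  + have H4 : n < size u + size c by rewrite -(subnKC H1) ltn_add2l.
    by rewrite H4.
  + have H4 : size u + size c <= n by rewrite -(subnKC H1) leq_add2l.
    by rewrite ltnNge H4.
Qed.

Lemma cw_prefix C D E u w : cw (C, D) w -> mulC delta F (cls u) C E -> cw (E, D) (app u w).
Proof.
move=> [c [v [Hc Hv ->]]] HM; exists (u ++ c), v; split => //; last exact: app_cat.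
rewrite (mulCE HM (mem_cls_self u) Hc); exact: mem_cls_self.
Qed.

Lemma calC_mul A C D E : calC (C, D) -> mulC delta F A C E -> calC (E, D).
Proof.
case: (cls_surj A) (cls_surj C) (cls_surj D) => a -> [c ->] [d ->].
move=> [/mulC_clsE HCD HDD] /mulC_clsE ->; split => //; apply/mulC_clsE.
by rewrite -catA; apply: cls_cat.
Qed.

Lemma cw_replace E D x x' t : calC (E, D) -> cw (E, D) (app x t) -> cls x = cls x' ->
  cw (E, D) (app x' t).
Proof.
move=> HC; case: t => [t|x1] /=.
- move=> /cwFin [HD HE] Ex; apply/cwFin; split => //.
  rewrite (memE HE) (@cls_cat x x' t t) //; exact: mem_cls_self.
- move=> /cwInf Hz Ex; apply/cwInf.
  case: (inCW_shift HC Hz (size x)) => B [HB HB0 HE HD].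
  exists (fun i => B i - size x + size x'); split.
  + move=> i; rewrite ltn_add2r ltn_sub2rE ?HB //.
    exact: leq_trans HB0 (incr_le (fun k => ltnW (HB k)) (leq0n i)).
  + rewrite appf_seg0 ?leq_addl // addnK.
    rewrite (memE (HE 0)) appf_seg0 //; apply/mem_cls.
    by apply/cls_eq; apply: cls_cat.
  + have Hge : forall i, size x <= B i.
      move=> i; exact: leq_trans HB0 (incr_le (fun k => ltnW (HB k)) (leq0n i)).
    move=> i; rewrite appf_seg ?leq_addl // !addnK.
    by move: (HD i); rewrite appf_seg.
Qed.

Lemma cw_split E D u v : calC (E, D) -> cw (E, D) (app u v) ->
  exists C, [/\ calC (C, D), cw (C, D) v & mulC delta F (cls u) C E].
Proof.
move=> HC; case: v => [v|x1].
- move=> /= /cwFin [HD HE]; exists (cls v); split.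
  + rewrite HD; split; apply/mulC_clsE; by rewrite cats0.
  + by apply/cwFin; split => //; exact: mem_cls_self.
  + by rewrite (memE HE); exact: mulC_cls.
- rewrite app_Inf => /cwInf Hz.
  case: (inCW_shift HC Hz (size u)) => B [HB HB0 HE HD].
  have Hge : forall i, size u <= B i.
    move=> i; exact: leq_trans HB0 (incr_le (fun k => ltnW (HB k)) (leq0n i)).
  set z := appf u x1 in HE HD.
  have Eb : forall i, seg z (B i) (B i.+1) = seg x1 (B i - size u) (B i.+1 - size u).
    by move=> i; apply: appf_seg.
  have F1 : seg x1 0 (B 1 - size u) = seg x1 0 (B 0 - size u) ++ seg z (B 0) (B 1).
    by rewrite Eb seg_cat // leq_sub2r // ltnW.
  have Hb01 : cls (seg z (B 0) (B 1) ++ seg z (B 1) (B 2)) = cls (seg z (B 0) (B 1)).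
    by rewrite -(memE (calC_DD HC (HD 0) (HD 1))) (memE (HD 0)).
  exists (cls (seg x1 0 (B 1 - size u))); split.
  + split; last exact: HC.2.
    rewrite /= (memE (HD 1)); apply/mulC_clsE.
    rewrite F1 -catA; apply: cls_cat => //; by rewrite Hb01.
  + apply/cwInf; exists (fun i => B i.+1 - size u); split.
    * by move=> i; rewrite ltn_sub2rE ?HB.
    * exact: mem_cls_self.
    * by move=> i; rewrite -Eb; exact: HD.
  + rewrite (memE (HE 1)) /z appf_seg0 //; exact: mulC_cls.
Qed.

Local Notation mulMW := (mulMW delta F).
Lemma part3b (U : lang Sigma) (V : olang Sigma) :
  alphaW (catL U V) = mulMW (alphaS U) (alphaW V).
Proof.
apply: fext2 => p; apply: pext; split.
- move: p; apply: (@alphaW_ind _ (mulMW (alphaS U) (alphaW V))).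
  + move=> [E D] [HC [w [Hw [u [v [Hu Hv Ew]]]]]].
    rewrite Ew in Hw; case: (cw_split HC Hw) => C [HCD HvC HM].
    exists (cls u), C; split => //; first by exists u; split => //; exact: mem_cls_self.
    by apply: alphaW_base; split => //; exists v.
  + move=> [E D] [E' D'] w [A [C' [[u [HuA Hu]] HC'D' HM']]] HC Hw Hw'; simpl in *.
    case: (cls_mem C') => c' Hc'.
    have EE' : E' = cls (u ++ c') := mulCE HM' HuA Hc'.
    case: Hw' => x0 [t [Hx0 Ht Ewt]].
    have Hy : cw (E, D) (app u (app c' t)).
      rewrite app_cat; apply: (@cw_replace _ _ x0) => //; first by rewrite -Ewt.
      by rewrite -(memE Hx0).
    case: (cw_split HC Hy) => C [HCD Hv HM].
    exists A, C; split => //; first by exists u.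
    * apply: (alphaW_step HC'D' HCD Hv); by exists c', t.
    * by rewrite (memE HuA).
- case: p => [E D] [A [C [[u [HuA Hu]] HCD HM]]]; simpl in *.
  rewrite (memE HuA) in HM.
  suff H : forall q, alphaW V q -> forall E, mulC delta F (cls u) q.1 E ->
      alphaW (catL U V) (E, q.2) by exact: (H (C, D) HCD E HM).
  apply: (@alphaW_ind _ (fun q => forall E, mulC delta F (cls u) q.1 E ->
      alphaW (catL U V) (E, q.2))).
  + move=> [C' D'] [HC [v [Hv HV]]] E' HM' /=; apply: alphaW_base; split.
    * exact: calC_mul HC HM'.
    * exists (app u v); split; first exact: cw_prefix Hv HM'.
      by exists u, v.
  + move=> [C1 D1] [C2 D2] w HS HC Hw Hw' E1 HM1 /=.
    case: (mulC_ex (cls u) C2) => E2 HM2.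
    apply: (@alphaW_step _ _ (E2, D2) (app u w)).
    * exact: HS E2 HM2.
    * exact: calC_mul HC HM1.
    * exact: cw_prefix Hw HM1.
    * exact: cw_prefix Hw' HM2.
Qed.

Lemma memDD D d1 d2 : mulC delta F D D D -> mem D d1 -> mem D d2 -> mem D (d1 ++ d2).
Proof. by move=> H H1 H2; rewrite (mulCE H H1 H2); exact: mem_cls_self. Qed.

Lemma memD_seg D z (P : nat -> nat) : mulC delta F D D D -> (forall i, P i < P i.+1) ->
  (forall i, mem D (seg z (P i) (P i.+1))) -> forall i n, mem D (seg z (P i) (P (i + n.+1))).
Proof.
move=> HDD HP HD i; elim=> [|n IH]; first by rewrite addn1.
rewrite addnS -(@seg_cat z (P i) (P (i + n.+1))).
- exact: memDD HDD IH (HD _).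
- apply: incr_le; [move=> k; exact: ltnW (HP k)|exact: leq_addr].
- exact: ltnW (HP _).
Qed.

Lemma core D z (P Bw : nat -> nat) : mulC delta F D D D -> (forall i, P i < P i.+1) ->
  (forall i, mem D (seg z (P i) (P i.+1))) -> (forall k, Bw k <= Bw k.+1) ->
  (forall n, exists k, n < Bw k) ->
  exists (kap : nat -> nat) (X : Cls), [/\ forall a, kap a < kap a.+1,
    forall a, Bw (kap a) < Bw (kap a.+1),
    forall a, mem X (seg z (Bw (kap a)) (Bw (kap a.+1)))
    & forall a, mem X (seg z (Bw (kap a)) (Bw (kap a.+2)))].
Proof.
move=> HDD HP HD HB HU.
have HDs : forall i i', i < i' -> mem D (seg z (P i) (P i')).
  move=> i i' Hii'; have := memD_seg HDD HP HD i (i' - i.+1).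
  by rewrite addnS -addSn subnKC.
case: (choice _ HU) => k Hk.
pose beta m := Bw (k (P m)).
have Hbeta : forall m, P m < beta m by move=> m; exact: Hk.
pose sm m := seg z (P m) (beta m).
case: (pigeon (fun m => sigw (sm m))) => sS HS.
case: (@extract _ beta HS) => g [HgS Hg].
pose p j := P (g j).
pose b j := beta (g j).
have Hpb : forall j, p j < b j by move=> j; exact: Hbeta.
have Hbp : forall j, b j <= p j.+1.
  by move=> j; exact: leq_trans (Hg j) (incr_ge HP _).
have Hg_inc : forall j, g j < g j.+1.
  move=> j; apply: leq_ltn_trans (incr_ge HP (g j)) _.
  exact: leq_trans (Hbeta _) (Hg j).
have Hb_inc : forall j, b j < b j.+1 by move=> j; exact: leq_ltn_trans (Hbp j) (Hpb j.+1).
have Hp_le : forall j, p j <= b j by move=> j; exact: ltnW.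
have Hdec : forall j j', j.+1 < j' ->
    seg z (b j) (b j') = seg z (b j) (p j.+1) ++ (seg z (p j.+1) (p j') ++ seg z (p j') (b j')).
  move=> j j' Hjj'.
  have H1 : p j.+1 <= p j'.
    apply: (@incr_le P) => [i|]; first exact: ltnW (HP i).
    exact: ltnW (incr_lt Hg_inc Hjj').
  rewrite (@seg_cat z (p j.+1)) // ?seg_cat //.
  by apply: leq_trans H1 _.
have HY : forall j j', j.+1 < j' -> cls (seg z (b j) (b j')) = cls (seg z (b j) (b j.+2)).
  move=> j j' Hjj'; rewrite (Hdec _ _ Hjj') (Hdec j j.+2) //.
  apply: cls_cat => //; apply: cls_cat.
  - have G1 : g j.+1 < g j' by apply: (incr_lt Hg_inc).
    have G2 : g j.+1 < g j.+2 by apply: Hg_inc.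
    by rewrite -(memE (HDs _ _ G1)) -(memE (HDs _ _ G2)).
  - by apply/cls_eq; rewrite /p /b -/(sm (g j')) -/(sm (g j.+2)) !HgS.
case: (pigeon (fun j => sigw (seg z (b j) (b j.+2)))) => sY HYs.
case: (@extract _ (fun j => j.+2) HYs) => io [HiY Hi].
have Hio : forall a a', a < a' -> (io a).+1 < io a'.
  move=> a a' /subnKC <-; elim: (a' - a.+1) => [|n IH]; first by rewrite addn0; exact: Hi.
  rewrite addnS; have := Hi (a.+1 + n); lia.
pose kap a := k (P (g (io a))).
have Hkb : forall a, Bw (kap a) = b (io a) by [].
pose X := cls (seg z (b (io 0)) (b (io 0).+2)).
have HX : forall a a', a < a' -> mem X (seg z (b (io a)) (b (io a'))).
  move=> a a' Haa'; apply/mem_cls; apply/cls_eq.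
  rewrite (HY _ _ (Hio _ _ Haa')); apply/cls_eq; by rewrite HiY HiY.
have Hbio : forall a, Bw (kap a) < Bw (kap a.+1).
  move=> a; rewrite !Hkb; apply: (incr_lt Hb_inc); apply: ltnW; exact: Hio.
exists kap, X; split.
- move=> a; rewrite ltnNge; apply/negP => H.
  have := incr_le HB H; rewrite leqNgt Hbio //.
- exact: Hbio.
- by move=> a; rewrite !Hkb; apply: HX.
- by move=> a; rewrite !Hkb; apply: HX; rewrite ltnS leqnSn.
Qed.

Lemma cls_flat (us ws : nat -> seq Sigma) : (forall i, cls (us i) = cls (ws i)) ->
  forall s, cls (flatten (map us s)) = cls (flatten (map ws s)).
Proof. by move=> H; elim=> //= i s IH; apply: cls_cat. Qed.

Lemma seg_mid ws z k l : concat_inf ws (Inf z) -> k <= l ->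
  seg z (size (pref ws k)) (size (pref ws l)) = flatten [seq ws i | i <- iota k (l - k)].
Proof.
move=> H Hkl; apply: (@catsI' (pref ws k)).
rewrite -pref_add subnKC //.
transitivity (seg z 0 (size (pref ws l))); last by rewrite -(concat_pref H l).
set K := size (pref ws k).
rewrite -(@seg_cat z 0 K) //; last exact: size_pref_mono.
by congr (_ ++ _); exact: concat_pref H k.
Qed.

Lemma buchi (U : lang Sigma) E D w : calC (E, D) -> cw (E, D) w ->
  omega (gammaS delta F (alphaS U)) w ->
  exists p' y, [/\ calC p', cw p' w, cw p' y & omega U y].
Proof.
move=> HC Hw [ws [Hws Hconc]].
have Hch : forall i, exists u, U u /\ cls u = cls (ws i).
  move=> i; case: (Hws i) => C [[u [HuC Hu]] HwC]; exists u; split => //.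
  by rewrite -(memE HuC) (memE HwC).
case: (choice _ Hch) => us Hus.
have Hcls : forall i, cls (us i) = cls (ws i) by move=> i; case: (Hus i).
have HusU : forall i, U (us i) by move=> i; case: (Hus i).
have Hnil : forall i, us i = [::] <-> ws i = [::].
  move=> i; split => H; apply/cls_nil; [rewrite -Hcls|rewrite Hcls]; by rewrite H.
have Hpref : forall N, cls (pref us N) = cls (pref ws N) by move=> N; exact: cls_flat.
case: w Hw Hconc => [v|z] Hw Hconc.
- case: Hconc => N [HN Ev]; move/cwFin: (Hw) => [HD HE].
  exists (E, D), (Fin (pref us N)); split => //.
  + apply/cwFin; split => //; rewrite (memE HE) Ev; apply/mem_cls; apply/cls_eq.
    by rewrite Hpref.
  + exists us; split => //; exists N; split => // i Hi; apply/Hnil; exact: HN.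
- have Hinf_us : forall N, exists2 i, N <= i & us i <> [::].
    case: Hconc => Hi _ N; case: (Hi N) => i Hi1 Hi2; exists i => // /Hnil; exact: Hi2.
  case: (omega_ex Hinf_us) => z' Hz'.
  move/cwInf: (Hw) => Hin; case: (inCW_shift HC Hin 0) => P [HP _ _ HPD].
  have HBw : forall k, size (pref ws k) <= size (pref ws k.+1) by move=> k; exact: size_pref_mono.
  have HUw := pref_unbounded Hconc.1.
  case: (core HC.2 HP HPD HBw HUw) => kap [X [Hkap HBk HX1 HX2]].
  have Tr : forall k l, k <= l -> cls (seg z' (size (pref us k)) (size (pref us l))) =
                                  cls (seg z (size (pref ws k)) (size (pref ws l))).
    by move=> k l Hkl; rewrite (seg_mid Hz' Hkl) (seg_mid Hconc Hkl); exact: cls_flat.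
  have Tp : forall k, cls (seg z' 0 (size (pref us k))) = cls (seg z 0 (size (pref ws k))).
    by move=> k; rewrite -(concat_pref Hz' k) -(concat_pref Hconc k).
  have Hle : forall a, size (pref ws (kap a)) <= size (pref ws (kap a.+1)).
    by move=> a; exact: ltnW (HBk a).
  have HXX : mulC delta F X X X.
    exists (seg z (size (pref ws (kap 0))) (size (pref ws (kap 1)))),
           (seg z (size (pref ws (kap 1))) (size (pref ws (kap 2)))); split.
    + exact: HX1 0.
    + exact: HX1 1.
    + by rewrite seg_cat // (memE (HX2 0)).
  pose C := cls (seg z 0 (size (pref ws (kap 1)))).
  have HCX : mulC delta F C X C.
    exists (seg z 0 (size (pref ws (kap 1)))),
           (seg z (size (pref ws (kap 1))) (size (pref ws (kap 2)))); split.
    + exact: mem_cls_self.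
    + exact: HX1 1.
    + rewrite /C seg_cat //.
      rewrite -(@seg_cat z 0 (size (pref ws (kap 0))) (size (pref ws (kap 1)))) //.
      rewrite -(@seg_cat z 0 (size (pref ws (kap 0))) (size (pref ws (kap 2)))) //; last first.
        exact: leq_trans (Hle 0) (Hle 1).
      apply: cls_cat => //.
      by rewrite -(memE (HX1 0)) -(memE (HX2 0)).
  exists (C, X), (Inf z'); split => //.
  + apply/cwInf; exists (fun a => size (pref ws (kap a.+1))); split => //.
    exact: mem_cls_self.
  + apply/cwInf; exists (fun a => size (pref us (kap a.+1))); split.
    * move=> a; rewrite ltnNge -(seg_nil z'); apply/eqP => H0.
      have := Tr _ _ (ltnW (Hkap a.+1)); rewrite H0 => /esym/cls_nil/eqP.
      by rewrite seg_nil leqNgt HBk.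
    * by apply/mem_cls; apply/cls_eq; rewrite Tp.
    * move=> a; rewrite (memE (HX1 a.+1)); apply/mem_cls; apply/cls_eq.
      by rewrite Tr // ltnW.
  + by exists us.
Qed.

Lemma part5 (U : lang Sigma) : alphaW (omega U) = omegaM delta F (alphaS U).
Proof.
rewrite /omegaM; apply: fext2 => p; apply: pext; split.
- apply: alphaW_mono => w [ws [Hws Hc]]; exists ws; split => // i.
  exists (cls (ws i)); split; last exact: mem_cls_self.
  by exists (ws i); split => //; exact: mem_cls_self.
- move: p; apply: (@alphaW_ind _ (alphaW (omega U))).
  + move=> [E D] [HC [w [Hw HV]]].
    case: (buchi HC Hw HV) => p' [y [Hp' Hwp' Hyp' Hy]].
    apply: (@alphaW_step _ _ p' w) => //.
    by apply: alphaW_base; split => //; exists y.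
  + move=> p p' w H HC Hw Hw'; exact: alphaW_step H HC Hw Hw'.
Qed.

End S.

Unset Implicit Arguments.

Theorem theorem12 (Sigma Q : finType) (delta : Q -> Sigma -> {set Q})
    (q0 : Q) (F : {set Q}) :
  (* (1) *)
  [/\ alphaS delta F (fun _ => True) = (fun _ => True),
      alphaW delta F (fun _ => True) = calC delta F,
      alphaS delta F (fun _ => False) = (fun _ => False)
    & alphaW delta F (fun _ => False) = (fun _ => False)] /\
  (* (2) *)
  (forall (U U' : lang Sigma) (V V' : olang Sigma),
      alphaS delta F (fun w => U w \/ U' w)
        = (fun C => alphaS delta F U C \/ alphaS delta F U' C) /\
      alphaW delta F (fun w => V w \/ V' w)
        = (fun p => alphaW delta F V p \/ alphaW delta F V' p)) /\
  (* (3) *)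
  (forall (U U' : lang Sigma) (V : olang Sigma),
      alphaS delta F (catF U U') = mulM delta F (alphaS delta F U) (alphaS delta F U') /\
      alphaW delta F (catL U V) = mulMW delta F (alphaS delta F U) (alphaW delta F V)) /\
  (* (4) *)
  (forall (n : nat) (Phi : ('I_n -> lang Sigma) -> 'I_n -> lang Sigma)
          (Fop : ('I_n -> Cls delta F -> Prop) -> 'I_n -> Cls delta F -> Prop),
      0 < n -> monotone_op Phi -> monotone_op Fop ->
      (forall X, (fun i => alphaS delta F (Phi X i))
                 = Fop (fun i => alphaS delta F (X i))) ->
      (fun i => alphaS delta F (lfp Phi i)) = lfp Fop) /\
  (* (5) *)
  (forall U : lang Sigma,
      alphaW delta F (omega U) = omegaM delta F (alphaS delta F U)).
Proof.
split; first exact: part1.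
split; first by move=> U U' V V'; apply: part2.
split; first by move=> U U' V; split; [exact: part3a|exact: part3b].
split; first exact: part4.
exact: part5.
Qed.
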